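(* For every connected graph $G$ of order $n$, with $m$ edges and maximum degree $\Delta$, we have ${\rm I}_e(G)\le \left\lfloor\frac{m}{2}\right\rfloor+n+\Delta-2$.
   Context: All graphs are finite and simple. A graph is locally irregular if no two adjacent vertices have the same degree. An edge-irregulator of a graph $G$ is a set $S\subseteq E(G)$ such that $G-S$ is locally irregular; ${\rm I}_e(G)$ is the minimum cardinality of an edge-irregulator of $G$. *)

(* Defs.v *)
From mathcomp Require Import all_boot.
Set Implicit Arguments. Unset Strict Implicit. Unset Printing Implicit Defensive.

Definition simple_graph (V : finType) (e : rel V) : Prop :=
  symmetric e /\ irreflexive e.

Definition edges (V : finType) (e : rel V) : {set {set V}} :=
  [set [set x; y] | x in V, y in V & e x y].

Definition del_edges (V : finType) (e : rel V) (S : {set {set V}}) : rel V :=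
  fun x y => e x y && ([set x; y] \notin S).

Definition deg (V : finType) (e : rel V) (x : V) : nat := #|[set y | e x y]|.

Definition max_deg (V : finType) (e : rel V) : nat := \max_(x : V) deg e x.

Definition connected (V : finType) (e : rel V) : Prop :=
  forall x y : V, connect e x y.

Definition locally_irregular (V : finType) (e : rel V) : bool :=
  [forall x : V, forall y : V, e x y ==> (deg e x != deg e y)].

Definition edge_irregulator (V : finType) (e : rel V) (S : {set {set V}}) : bool :=
  (S \subset edges e) && locally_irregular (del_edges e S).

Lemma edge_irregulator_exists (V : finType) (e : rel V) :
  exists n, [exists S : {set {set V}}, edge_irregulator e S && (#|S| == n)].
Proof.
exists #|edges e|; apply/existsP; exists (edges e); rewrite eqxx andbT.
rewrite /edge_irregulator subxx /=; apply/forallP => x; apply/forallP => y.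
apply/implyP; rewrite /del_edges => /andP[exy]; case/negP.
by apply/imset2P; exists x y => //; rewrite inE.
Qed.

Definition Ie (V : finType) (e : rel V) : nat :=
  ex_minn (edge_irregulator_exists e).

(* Main.v *)
Require Import Defs.
From mathcomp Require Import all_boot zify.
Set Implicit Arguments. Unset Strict Implicit. Unset Printing Implicit Defensive.

Section S.
Variables (V : finType) (e : rel V).
Hypothesis esym : symmetric e.
Hypothesis eirr : irreflexive e.

Definition EA (A : {set V}) := [set f in edges e | f \subset A].
Definition CE (X A : {set V}) := [set f in EA A | #|f :&: X| == 1].
Definition dg (F : {set {set V}}) (w : V) := #|[set f in F | w \in f]|.
Definition nb (v : V) (A : {set V}) := [set y in A | e v y].

Lemma edgesP f : reflect (exists x y, e x y /\ f = [set x; y]) (f \in edges e).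
Proof.
apply: (iffP imset2P) => [[x y _]|[x [y [exy ->]]]].
  by rewrite inE => exy ->; exists x, y.
by exists x y => //; rewrite inE.
Qed.

Lemma edge_in x y : e x y -> [set x; y] \in edges e.
Proof. by move=> h; apply/edgesP; exists x, y. Qed.

Lemma card_edge f : f \in edges e -> #|f| = 2.
Proof.
case/edgesP=> x [y [exy ->]]; rewrite cards2.
case: eqP => // exy'; by rewrite exy' eirr in exy.
Qed.

Lemma dg_sum (F : {set {set V}}) w : dg F w = \sum_(f in F) (w \in f).
Proof.
rewrite /dg -sum1_card big_mkcond /= [RHS]big_mkcond /=.
apply: eq_bigr => f _; rewrite inE; by case: (f \in F); case: (w \in f).
Qed.

Lemma handshake (F : {set {set V}}) : F \subset edges e -> \sum_w dg F w = 2 * #|F|.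
Proof.
move=> sF.
rewrite (eq_bigr (fun w => \sum_(f in F) (w \in f))); last by move=> w _; rewrite dg_sum.
rewrite exchange_big /= -sum1_card big_distrr /=.
apply: eq_bigr => f fF; rewrite muln1 -(card_edge (subsetP sF f fF)).
by rewrite -sum1_card [RHS]big_mkcond /=; apply: eq_bigr => w _; case: (w \in f).
Qed.

Lemma odd_sumb (I : finType) (P : pred I) (g : I -> nat) :
  odd (\sum_(i | P i) g i) = \big[addb/false]_(i | P i) odd (g i).
Proof. by apply: (big_morph odd oddD). Qed.


Inductive grown : {set V} -> Prop :=
 | gbase r : grown [set r]
 | gstep A u v : grown A -> u \in A -> v \notin A -> e u v -> grown (v |: A).

Lemma grown_n0 A : grown A -> exists a, a \in A.
Proof.
case=> [r|A' u v _ _ _ _]; first by exists r; rewrite set11.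
by exists v; rewrite setU11.
Qed.

Lemma crossing x y (A : {set V}) : connect e x y -> x \in A -> y \notin A ->
  exists u v, [/\ u \in A, v \notin A & e u v].
Proof.
case/connectP=> p; elim: p x => [|z p IH] x /=.
  by move=> _ -> ->.
case/andP=> exz pz ly xA yA.
case zA: (z \in A); first exact: IH pz ly zA yA.
by exists x, z; rewrite zA.
Qed.

Lemma grown_setT : connected e -> forall r : V, grown [set: V].
Proof.
move=> conn r.
have: forall k, k <= #|V| -> exists A, grown A /\ k <= #|A|.
  elim=> [|k IH] hk; first by exists [set r]; split => //; exact: gbase.
  have [A [gA kA]] := IH (ltnW hk).
  case: (ltnP k #|A|) => kA'; first by exists A.
  have kA2 : #|A| = k by apply/eqP; rewrite eqn_leq kA kA'.
  have [w wA] : exists w, w \notin A.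
    apply/existsP; rewrite -negb_forall; apply/negP => /forallP allA.
    have : #|A| = #|V| by apply/eqP; rewrite eqn_leq max_card /= -cardsT subset_leq_card //; apply/subsetP => x _; exact: allA.
    lia.
  have [a aA] := grown_n0 gA.
  have [u [v [uA vA euv]]] := crossing (conn a w) aA wA.
  exists (v |: A); split; first exact: gstep gA uA vA euv.
  by rewrite cardsU1 vA; lia.
move/(_ #|V| (leqnn _)) => [A [gA hA]].
have eqA : A = [set: V] by apply/eqP; rewrite eqEcard subsetT cardsT hA.
by rewrite -eqA.
Qed.


Lemma setI2 x y (Z : {set V}) : [set x; y] :&: Z =
  (if x \in Z then [set x] else set0) :|: (if y \in Z then [set y] else set0).
Proof.
apply/setP => z; rewrite !inE.
case xZ: (x \in Z); case yZ: (y \in Z); rewrite !inE ?orbF ?orFb.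
all: case: (eqVneq z x) => [zx|nzx]; [subst z; rewrite ?xZ ?yZ /= ?orbT ?andbT ?andbF //|].
all: try (case: (eqVneq z y) => [?|?]; subst; rewrite ?xZ ?yZ ?andbF ?andbT //).
all: try (case: (eqVneq x y) => [?|?]; subst; congruence).
Qed.

Lemma card_cut x y (Z : {set V}) : x != y -> #|[set x; y] :&: Z| = (x \in Z) + (y \in Z).
Proof.
move=> nxy; rewrite setI2.
case: (x \in Z); case: (y \in Z); rewrite ?set0U ?setU0 ?cards0 ?cards1 //.
by rewrite cards2 nxy.
Qed.

Lemma EA_sub (A : {set V}) f : f \in EA A -> f \in edges e /\ f \subset A.
Proof. by rewrite inE => /andP. Qed.

Lemma EA_step (A : {set V}) v : v \notin A -> #|EA (v |: A)| <= #|EA A| + #|nb v A|.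
Proof.
move=> vA.
have sub : EA (v |: A) \subset EA A :|: [set [set v; y] | y in nb v A].
  apply/subsetP => f; rewrite inE => /andP[fE fA].
  case/edgesP: (fE) => x [y [exy fxy]].
  case vf: (v \in f).
    apply/setUP; right; apply/imsetP.
    move: vf; rewrite fxy !inE => /orP[/eqP vx|/eqP vy].
      subst x; exists y => //; rewrite inE exy andbT.
      have : y \in v |: A by apply: (subsetP fA); rewrite fxy !inE eqxx orbT.
      rewrite !inE => /orP[/eqP yv|//]; by rewrite yv eirr in exy.
    subst y; exists x; last by rewrite setUC.
    rewrite inE esym exy andbT.
    have : x \in v |: A by apply: (subsetP fA); rewrite fxy !inE eqxx.
    rewrite !inE => /orP[/eqP xv|//]; by rewrite xv eirr in exy.
  apply/setUP; left; rewrite inE fE /=; apply/subsetP => z zf.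
  have : z \in v |: A by exact: (subsetP fA).
  rewrite !inE => /orP[/eqP zv|//]; by rewrite -zv zf in vf.
apply: (leq_trans (subset_leq_card sub)).
rewrite cardsU; apply: (leq_trans (leq_subr _ _)).
by rewrite leq_add2l leq_imset_card.
Qed.

Lemma dgU1 g (F : {set {set V}}) z : g \notin F -> dg (g |: F) z = (z \in g) + dg F z.
Proof. by move=> gF; rewrite !dg_sum big_setU1. Qed.

Lemma dg0 z : dg set0 z = 0.
Proof. by rewrite dg_sum big_set0. Qed.

Definition TJ (X A : {set V}) := forall T : {set V}, T \subset A -> ~~ odd #|T| ->
  exists F : {set {set V}}, [/\ F \subset CE X A, #|F| <= #|A| - 1 &
     forall w, odd (dg F w) = (w \in T)].

Definition good (X A : {set V}) := [/\ X \subset A, #|EA A| <= 2 * #|CE X A| & TJ X A].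

Lemma CE_sub (X A : {set V}) f : f \in CE X A -> [/\ f \in edges e, f \subset A & #|f :&: X| = 1].
Proof. by rewrite !inE => /andP[/andP[-> ->] /eqP ->]. Qed.


Lemma odd_cardT (T : {set V}) : odd #|T| = \big[addb/false]_z (z \in T).
Proof.
rewrite -sum1_card big_mkcond /= (big_morph odd oddD (erefl : odd 0 = false)).
by apply: eq_bigr => z _; case: (z \in T).
Qed.

Lemma good_base r : good set0 [set r].
Proof.
split; first exact: sub0set.
  have -> : EA [set r] = set0.
    apply/setP=> f; rewrite !inE; apply/negbTE/negP => /andP[fE fs].
    by have := subset_leq_card fs; rewrite cards1 card_edge.
  by rewrite cards0.
move=> T Tr Tev; exists set0; split; rewrite ?sub0set ?cards0 //.
have T0 : T = set0.
  apply/eqP; rewrite -cards_eq0; have := subset_leq_card Tr; rewrite cards1.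
  by move: Tev; case: #|T| => [|[|]].
by move=> w; rewrite dg0 T0 inE.
Qed.

Lemma good_step_gen (A X X' : {set V}) v : good X A -> v \notin A ->
  X' \subset v |: A -> (forall z, z \in A -> (z \in X') = (z \in X)) ->
  0 < #|nb v A| ->
  #|nb v A| <= 2 * #|[set y in nb v A | (y \in X') != (v \in X')]| ->
  good X' (v |: A).
Proof.
move=> [XA EAc tj] vA X'A hX nb0 nbc.
set N' := [set y in nb v A | _] in nbc.
have yA y : y \in N' -> [/\ y \in A, e v y & (y \in X') != (v \in X')].
  by rewrite !inE => /andP[/andP[-> ->] ->].
have nvy y : y \in A -> v != y by move=> hy; apply/eqP => vy; rewrite vy hy in vA.
set img := [set [set v; y] | y in N'].
have CEA f : f \in CE X A -> f \in CE X' (v |: A).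
  case/CE_sub => fE fA fc; rewrite !inE fE /=.
  rewrite (subset_trans fA (subsetUr _ _)) /=.
  have -> : f :&: X' = f :&: X.
    apply/setP => z; rewrite !inE; case zf: (z \in f) => //=.
    by apply: hX; exact: (subsetP fA).
  by rewrite fc.
have imgC f : f \in img -> f \in CE X' (v |: A).
  case/imsetP => y /yA [yA' evy cut] ->.
  rewrite !inE edge_in //=; apply/andP; split.
    by apply/subsetP => z; rewrite !inE => /orP[/eqP->|/eqP->]; rewrite ?eqxx ?yA' ?orbT.
  rewrite card_cut ?nvy //; move: cut; by case: (y \in X'); case: (v \in X').
have CEsub f : f \in CE X A -> f \subset A by case/CE_sub.
have disj : CE X A :&: img = set0.
  apply/setP => f; rewrite in_setI in_set0; apply/negbTE/negP => /andP[/CEsub fA /imsetP[y _ fy]].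
  by move: vA; rewrite (subsetP fA) // fy !inE eqxx.
have cimg : #|img| = #|N'|.
  apply: card_in_imset => y y' /yA [y1 _ _] /yA [y1' _ _] eq.
  have : y \in [set v; y'] by rewrite -eq !inE eqxx orbT.
  rewrite !inE => /orP[/eqP yv|/eqP //]; by rewrite -yv y1 in vA.
have cU : #|CE X A :|: img| = #|CE X A| + #|N'| by rewrite cardsU disj cards0 subn0 cimg.
have sU : CE X A :|: img \subset CE X' (v |: A).
  by apply/subsetP => f /setUP[/CEA|/imgC].
split => //.
  apply: (leq_trans (EA_step vA)).
  apply: (leq_trans _ (leq_mul (leqnn 2) (subset_leq_card sU))).
  by rewrite cU mulnDr leq_add.
have [w wN] : exists w, w \in N'.
  by apply/set0Pn; rewrite -card_gt0; move: nb0 nbc; case: #|N'| => //; rewrite muln0; case: #|nb v A|.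
have [wA evw cutw] := yA w wN.
have vw : [set v; w] \in img by apply/imsetP; exists w.
move=> T TS Tev.
case vT: (v \in T); last first.
  have TA : T \subset A.
    apply/subsetP => z zT; have := subsetP TS z zT; rewrite !inE => /orP[/eqP zv|//].
    by rewrite -zv zT in vT.
  have [F [FC Fc Fd]] := tj T TA Tev.
  exists F; split; last exact: Fd.
    by apply: subset_trans FC _; apply/subsetP => f /CEA.
  rewrite cardsU1 vA add1n subSS; apply: (leq_trans Fc); rewrite subn0; exact: leq_subr.
set T2 := [set z | (z \in T) (+) (z \in [set v; w])].
have T2A : T2 \subset A.
  apply/subsetP => z; rewrite !inE.
  case: (eqVneq z v) => [->|zv]; first by rewrite vT.
  case: (eqVneq z w) => [->|zw]; first by rewrite wA.
  rewrite /= addbF => zT; have := subsetP TS z zT; rewrite !inE (negbTE zv) //.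
have T2ev : ~~ odd #|T2|.
  rewrite odd_cardT (eq_bigr (fun z => (z \in T) (+) (z \in [set v; w]))); last by move=> z _; rewrite inE.
  rewrite big_split /= -!odd_cardT cards2 nvy //.
  by move: Tev; case: (odd #|T|).
have [F2 [F2C F2c F2d]] := tj T2 T2A T2ev.
have vwF2 : [set v; w] \notin F2.
  apply/negP => h; have fA := CEsub _ (subsetP F2C _ h).
  have := subsetP fA v; rewrite !inE eqxx => /(_ isT) vA'.
  by rewrite vA' in vA.
exists ([set v; w] |: F2); split.
- apply/subsetP => f /setU1P[->|/(subsetP F2C)/CEA //]; exact: imgC.
- rewrite (cardsU1 [set v; w]) vwF2 (cardsU1 v) vA add1n add1n subn1 /=.
  have A0 : 0 < #|A| by rewrite card_gt0; apply/set0Pn; exists w.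
  by apply: (leq_ltn_trans F2c); rewrite ltn_subrL A0.
- move=> z; rewrite dgU1 // oddD oddb F2d !inE.
  case: (eqVneq z v) => [->|zv]; first by rewrite vT.
  case: (eqVneq z w) => [->|zw] /=; last by rewrite addbF.
  by rewrite addbT negbK.
Qed.


Lemma good_step (A X : {set V}) u v : good X A -> u \in A -> v \notin A -> e u v ->
  exists X', [/\ good X' (v |: A), X' \subset v |: A & forall z, z \in A -> (z \in X') = (z \in X)].
Proof.
move=> gX uA vA euv.
have [XA _ _] := gX.
have vX : v \notin X by apply/negP => /(subsetP XA) vA'; rewrite vA' in vA.
have nb0 : 0 < #|nb v A| by rewrite card_gt0; apply/set0Pn; exists u; rewrite !inE uA esym.
have cID := cardsID X (nb v A).
case: (leqP #|nb v A :\: X| #|nb v A :&: X|) => hab.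
  have XvA : X \subset v |: A by apply: (subset_trans XA); exact: subsetUr.
  have sub : nb v A :&: X \subset [set y in nb v A | (y \in X) != (v \in X)].
    by apply/subsetP => y; rewrite !inE (negbTE vX) => /andP[/andP[-> ->] ->].
  exists X; split => //.
  apply: (good_step_gen gX vA XvA) => // .
  have := subset_leq_card sub; lia.
have XvA : v |: X \subset v |: A by apply: setUS.
have hX z : z \in A -> (z \in v |: X) = (z \in X).
  move=> zA; rewrite !inE; case: eqP => // zv; by rewrite -zv zA in vA.
have sub : nb v A :\: X \subset [set y in nb v A | (y \in v |: X) != (v \in v |: X)].
  apply/subsetP => y; rewrite !inE => /andP[yX /andP[yA evy]].
  have yv : y != v by apply/eqP => yv; rewrite -yv yA in vA.
  by rewrite yA evy eqxx (negbTE yv) (negbTE yX).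
exists (v |: X); split => //.
apply: (good_step_gen gX vA XvA) => //.
have := subset_leq_card sub; lia.
Qed.

Lemma good_grown A : grown A -> exists X, good X A.
Proof.
elim=> [r|A' u v gA [X gX] uA vA euv]; first by exists set0; exact: good_base.
by have [X' [g _ _]] := good_step gX uA vA euv; exists X'.
Qed.


Lemma deg_dg (H : {set {set V}}) x : H \subset edges e ->
  deg (del_edges e (edges e :\: H)) x = dg H x.
Proof.
move=> HE; rewrite /deg /dg.
have -> : [set f in H | x \in f] = [set [set x; y] | y in [set y | del_edges e (edges e :\: H) x y]].
  apply/setP => f; rewrite inE; apply/andP/imsetP.
    move=> [fH xf]; case/edgesP: (subsetP HE f fH) => a [b [eab fab]].
    move: xf; rewrite fab !inE => /orP[/eqP xa|/eqP xb].
      subst a; exists b => //; rewrite inE /del_edges eab !inE -fab fH.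
      by rewrite andbT.
    subst b; exists a; last by rewrite setUC.
    by rewrite inE /del_edges esym eab !inE setUC -fab fH.
  move=> [y]; rewrite inE /del_edges => /andP[exy]; rewrite !inE edge_in // andbT negbK => yH ->.
  by rewrite yH !inE eqxx.
rewrite card_in_imset //.
move=> y y'; rewrite !inE /del_edges => /andP[exy _] /andP[exy' _] eq.
have : y \in [set x; y'] by rewrite -eq !inE eqxx orbT.
rewrite !inE => /orP[/eqP yx|/eqP //]; by rewrite yx eirr in exy.
Qed.

Lemma Ie_le (D : {set {set V}}) : edge_irregulator e D -> Ie e <= #|D|.
Proof.
move=> h; rewrite /Ie; case: ex_minnP => m _ hmin; apply: hmin.
by apply/existsP; exists D; rewrite h eqxx.
Qed.

Lemma finish (S X Q : {set V}) : good X S -> Q \subset S -> ~~ odd #|Q| ->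
  (forall x y, x \in S -> y \in S -> (x \in X) != (y \in X) -> (x \in Q) != (y \in Q)) ->
  Ie e + #|CE X S| <= #|edges e| + (#|S| - 1).
Proof.
move=> [XS _ tj] QS Qev hQ.
set C := CE X S.
have CE' : C \subset edges e by apply/subsetP => f /CE_sub [].
set T := [set z | odd (dg C z) != (z \in Q)].
have TS : T \subset S.
  apply/subsetP => z; rewrite inE; case zS: (z \in S) => //.
  have -> : z \in Q = false by apply/negP => /(subsetP QS); rewrite zS.
  have -> : dg C z = 0.
    apply/eqP; rewrite cards_eq0; apply/eqP/setP => f; rewrite in_set0 in_set.
    apply/negP => /andP[/CE_sub [_ fS _] zf]; by rewrite (subsetP fS z zf) in zS.
  by [].
have Tev : ~~ odd #|T|.
  rewrite odd_cardT (eq_bigr (fun z => odd (dg C z) (+) (z \in Q))); last by move=> z _; rewrite inE negb_eqb.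
  rewrite big_split /= -odd_cardT -(big_morph odd oddD (erefl : odd 0 = false)).
  by rewrite handshake // oddM /=; by move: Qev; case: (odd #|Q|).
have [F [FC Fc Fd]] := tj T TS Tev.
set H := C :\: F.
have HE : H \subset edges e by apply: subset_trans CE'; exact: subsetDl.
have dgH z : odd (dg H z) = (z \in Q).
  have : dg C z = dg F z + dg H z.
    by rewrite !dg_sum (big_setID F) /= (setIidPr FC).
  move=> /(congr1 odd); rewrite oddD Fd inE => hC.
  by move: hC; case: (odd (dg H z)); case: (odd (dg C z)); case: (z \in Q).
have irr : edge_irregulator e (edges e :\: H).
  rewrite /edge_irregulator subsetDl /=.
  apply/forallP => x; apply/forallP => y; apply/implyP => hxy.
  rewrite !deg_dg //.
  have fH : [set x; y] \in H.
    move: hxy; rewrite /del_edges => /andP[exy]; by rewrite !inE edge_in // andbT negbK.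
  have [_ fS fc] := CE_sub (subsetP (subsetDl C F) _ fH).
  have xS : x \in S by apply: (subsetP fS); rewrite !inE eqxx.
  have yS : y \in S by apply: (subsetP fS); rewrite !inE eqxx orbT.
  have nxy : x != y by apply/eqP => xy; move: hxy; rewrite /del_edges xy eirr.
  have cut : (x \in X) != (y \in X) by move: fc; rewrite card_cut //; case: (x \in X); case: (y \in X).
  have := hQ x y xS yS cut; rewrite -!dgH; apply: contra => /eqP ->; exact: eqxx.
have := Ie_le irr.
have cH : #|H| + #|F| = #|C| by rewrite /H addnC -{1}(setIidPr FC) cardsID.
have cD : #|edges e :\: H| + #|H| = #|edges e| by rewrite addnC -{1}(setIidPr HE) cardsID.
have cCE : #|C| <= #|edges e| by apply: subset_leq_card.
move: Fc cH cD cCE.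
move: #|F| #|H| #|C| #|edges e :\: H| #|edges e| #|S| (Ie e) => a b c d g s i.
lia.
Qed.


Lemma grown_last A : grown A -> 2 <= #|A| ->
  exists A' u v, [/\ grown A', u \in A', v \notin A', e u v & A = v |: A'].
Proof.
case=> [r|A' u v gA uA vA euv]; first by rewrite cards1.
by exists A', u, v.
Qed.

Lemma EAT : EA [set: V] = edges e.
Proof. by apply/setP => f; rewrite inE subsetT andbT. Qed.

Lemma deg_max v : deg e v <= max_deg e.
Proof. exact: (leq_bigmax v). Qed.

End S.

Theorem theorem7 (V : finType) (e : rel V) :
  simple_graph e -> connected e -> 2 <= #|V| ->
  Ie e <= #|edges e| %/ 2 + #|V| + max_deg e - 2.
Proof.
move=> [esym eirr] conn n2.
have [r _] : exists r : V, r \in [set: V].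
  by apply/set0Pn; rewrite -card_gt0 cardsT; apply: leq_trans n2.
have gT := grown_setT conn r.
have n2' : 1 < #|[set: V]| by rewrite cardsT.
have [A' [u [v [gA uA vA euv Teq]]]] := grown_last gT n2'.
have [X0 gX0] := good_grown esym eirr gA.
have [XA EAc tj] := gX0.
have nV : #|V| = #|A'|.+1 by rewrite -cardsT Teq cardsU1 vA.
have Ek : #|edges e| <= #|EA e A'| + #|nb e v A'|.
  by rewrite -EAT Teq; apply: EA_step esym eirr _ _ vA.
have kD : #|nb e v A'| <= max_deg e.
  apply: leq_trans (deg_max e v); apply: subset_leq_card.
  by apply/subsetP => y; rewrite !inE => /andP[].
have D1 : 1 <= max_deg e.
  apply: leq_trans (deg_max e u); rewrite card_gt0; apply/set0Pn; exists v; by rewrite inE.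
have s1 : 1 <= #|A'| by rewrite card_gt0; apply/set0Pn; exists u.
have cX0 : #|X0| + #|A' :\: X0| = #|A'| by rewrite -{1}(setIidPr XA) cardsID.
case hP: (~~ odd #|X0| || ~~ odd #|A' :\: X0|).
  set Q := if ~~ odd #|X0| then X0 else A' :\: X0.
  have QS : Q \subset A' by rewrite /Q; case: ifP => _ //; exact: subsetDl.
  have Qev : ~~ odd #|Q| by rewrite /Q; case: ifP => //; move: hP; case: (odd #|X0|).
  have hQ x y : x \in A' -> y \in A' -> (x \in X0) != (y \in X0) -> (x \in Q) != (y \in Q).
    by rewrite /Q; case: ifP => _ //; rewrite !inE => -> ->; rewrite !andbT; case: (x \in X0); case: (y \in X0).
  have := finish esym eirr gX0 QS Qev hQ.
  move: Ek kD D1 s1 nV EAc.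
  move: #|edges e| #|EA e A'| #|nb e v A'| (max_deg e) #|A'| #|V| #|CE e X0 A'| (Ie e).
  move=> E a k D s n c i; lia.
have [X' [gX' _ _]] := good_step esym eirr gX0 uA vA euv.
rewrite -Teq in gX'.
have [_ EAc' _] := gX'.
rewrite EAT in EAc'.
have cX' : #|X'| + #|[set: V] :\: X'| = #|V| by rewrite -{1}(setIidPr (subsetT X')) cardsID cardsT.
set Q := if ~~ odd #|X'| then X' else [set: V] :\: X'.
have QS : Q \subset [set: V] by exact: subsetT.
have Qev : ~~ odd #|Q|.
  rewrite /Q; case: ifP => // /negbFE oX'.
  have := congr1 odd cX0; have := congr1 odd cX'; rewrite nV /= !oddD oX'.
  move: hP; case: (odd #|X0|); case: (odd #|A' :\: X0|) => //= _.
  by case: (odd #|A'|); case: (odd #|[set: V] :\: X'|).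
have hQ x y : x \in [set: V] -> y \in [set: V] -> (x \in X') != (y \in X') -> (x \in Q) != (y \in Q).
  by rewrite /Q; case: ifP => _ //; rewrite !inE; case: (x \in X'); case: (y \in X').
have := finish esym eirr gX' QS Qev hQ.
rewrite cardsT.
move: EAc' D1 n2.
move: #|edges e| (max_deg e) #|V| #|CE e X' [set: V]| (Ie e).
move=> E D n c i; lia.
Qed.
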